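(* There exist $a_1\ge1$ and $b_1\in(0,1)$, depending only on $\alpha$, such that for every $a>a_1$ and every $b\in(0,b_1)$ we have $\mathcal D(t,b)\subset B(p,r_p)$ for all $p\in\mathcal T(a,b)$ and all $t\in[z_p,-1]$.
   Context: $\mathbb H=\mathbb R^3$, $p=(x_p,y_p,z_p)$, $\rho_p=\sqrt{x_p^2+y_p^2}$, group law $(x,y,z)\cdot(x',y',z')=(x+x',y+y',z+z'+\tfrac12(xy'-yx'))$, dilations $\delta_\lambda(x,y,z)=(\lambda x,\lambda y,\lambda^2z)$. Fix $\alpha>0$ such that $d_\alpha(p,q)=\inf\{r>0:\delta_{1/r}(p^{-1}\cdot q)\in B_\alpha\}$ is a distance, $B_\alpha$ the closed Euclidean ball of radius $\alpha$ at $0$. $B(p,r)=\{q:d_\alpha(q,p)\le r\}$, $r_p=d_\alpha(0,p)$. $\mathcal T(a,b)=\{p: z_p<-a,\ \rho_p<b\}$ and $\mathcal D(t,b)=\{q: z_q=t,\ \rho_q<b\}$. *)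

(* Defs.v *)
From Stdlib Require Import Reals.
Open Scope R_scope.

(* Points of the Heisenberg group H = R^3. *)
Record pt := mkpt { xc : R; yc : R; zc : R }.

Definition hmul (p q : pt) : pt :=
  mkpt (xc p + xc q) (yc p + yc q)
       (zc p + zc q + / 2 * (xc p * yc q - yc p * xc q)).

Definition hinv (p : pt) : pt := mkpt (- xc p) (- yc p) (- zc p).

Definition horigin : pt := mkpt 0 0 0.

Definition dil (l : R) (p : pt) : pt := mkpt (l * xc p) (l * yc p) (l * l * zc p).

Definition rho (p : pt) : R := sqrt (xc p ^ 2 + yc p ^ 2).

Definition in_Balpha (alpha : R) (p : pt) : Prop :=
  xc p ^ 2 + yc p ^ 2 + zc p ^ 2 <= alpha ^ 2.

Definition dset (alpha : R) (p q : pt) (r : R) : Prop :=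
  0 < r /\ in_Balpha alpha (dil (/ r) (hmul (hinv p) q)).

Definition is_inf (E : R -> Prop) (m : R) : Prop :=
  (forall x, E x -> m <= x) /\ (forall m', (forall x, E x -> m' <= x) -> m' <= m).

Definition is_d_alpha (alpha : R) (d : pt -> pt -> R) : Prop :=
  forall p q, is_inf (dset alpha p q) (d p q).

Definition is_distance (d : pt -> pt -> R) : Prop :=
  (forall p q, 0 <= d p q) /\
  (forall p q, d p q = 0 <-> p = q) /\
  (forall p q, d p q = d q p) /\
  (forall p q s, d p s <= d p q + d q s).

Definition ball (d : pt -> pt -> R) (p : pt) (r : R) (q : pt) : Prop := d q p <= r.

Definition rpt (d : pt -> pt -> R) (p : pt) : R := d horigin p.

Definition Tset (a b : R) (p : pt) : Prop := zc p < - a /\ rho p < b.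

Definition Dset (t b : R) (q : pt) : Prop := zc q = t /\ rho q < b.

(* Main.v *)
Require Import Defs.
From Stdlib Require Import Reals Lra Psatz.
Open Scope R_scope.

Lemma key (al b xp yp zp xq yq t w : R) : 0<al -> 0<w -> 0 < b ->
  xp^2+yp^2 < b^2 -> xq^2+yq^2<b^2 -> b^2 <= al/16 -> b <= 1/4 ->
  zp < -1 -> zp <= t -> t <= -1 -> al <= -2*zp*w ->
  w*(xp^2+yp^2) + w^2*zp^2 <= al^2 ->
  w*((xp-xq)^2+(yp-yq)^2) + w^2*(zp - t + /2*(xp*yq - yp*xq))^2 <= al^2.
Proof.
intros.
assert (Hh : (xp-xq)^2+(yp-yq)^2 <= 4*b^2) by (pose proof (pow2_ge_0 (xp+xq)); pose proof (pow2_ge_0 (yp+yq)); nra).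
assert (He2 : (xp*yq - yp*xq)^2 <= (xp^2+yp^2)*(xq^2+yq^2)) by (pose proof (pow2_ge_0 (xp*xq+yp*yq)); nra).
assert (He3 : (xp*yq - yp*xq)^2 <= b^4) by nra.
set (e := /2*(xp*yq - yp*xq)).
assert (Hb2 : b^2 <= 1/16) by nra.
assert (He : -(1/32) <= e <= 1/32).
{ unfold e. assert (Hq: (xp*yq - yp*xq)^2 <= 1/256) by nra. split; nra. }
set (z' := zp - t + e).
assert (Hz : zp + 1/2 <= z' <= 1/32) by (unfold z'; lra).
assert (Hz2 : z'^2 <= (zp+1/2)^2) by nra.
assert (Hw : w*(-zp - 1/4) >= al/4) by nra.
assert (Hs : w*(4*b^2) + w^2*(zp+1/2)^2 <= al^2).
{ assert (w^2*zp^2 <= al^2) by nra.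
  assert (w*(4*b^2) <= w*(al/4)) by nra.
  replace (w^2*(zp+1/2)^2) with (w^2*zp^2 - w*(w*(-zp-1/4))) by field.
  nra. }
assert (w*((xp-xq)^2+(yp-yq)^2) <= w*(4*b^2)) by nra.
assert (w^2*z'^2 <= w^2*(zp+1/2)^2) by nra.
lra.
Qed.

Lemma rho_sq (p : pt) (b : R) : rho p < b -> xc p ^2 + yc p ^2 < b^2.
Proof.
unfold rho; intros H.
pose proof (sqrt_pos (xc p ^2 + yc p ^2)).
rewrite <- (sqrt_sqrt (xc p ^2 + yc p ^2)) by nra. nra.
Qed.

Lemma core (al b : R) (p q : pt) (r : R) : 0<al -> 0 < b -> b^2 <= al/16 -> b <= 1/4 ->
  xc p^2+yc p^2 < b^2 -> xc q^2+yc q^2<b^2 -> zc p < -1 -> zc p <= zc q -> zc q <= -1 ->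
  0 < r -> al * r^2 <= -2 * zc p -> dset al horigin p r -> dset al q p r.
Proof.
intros Hal Hb Hb2 Hb4 Hp Hq Hz Hzt Ht Hr Hra [_ Hd].
split; [exact Hr|].
unfold in_Balpha, dil, hmul, hinv, horigin in *; cbn [xc yc zc] in *.
set (u := / r) in *.
assert (Hur : r * u = 1) by (unfold u; field; lra).
assert (Hu : 0 < u) by (unfold u; apply Rinv_0_lt_compat; lra).
set (w := u*u).
assert (Hw : 0 < w) by (unfold w; nra).
assert (Hal2 : al <= -2 * zc p * w).
{ replace al with (al * r^2 * w) by (unfold w; replace (al*r^2*(u*u)) with (al*((r*u)*(r*u))) by ring; rewrite Hur; ring).
  nra. }
assert (E1 : (u * (- 0 + xc p)) ^ 2 + (u * (- 0 + yc p)) ^ 2 +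
      (u * u * (- 0 + zc p + / 2 * (- 0 * yc p - - 0 * xc p))) ^ 2 = w*(xc p^2+yc p^2) + w^2*zc p^2) by (unfold w; field).
rewrite E1 in Hd.
pose proof (key al b (xc p) (yc p) (zc p) (xc q) (yc q) (zc q) w Hal Hw Hb Hp Hq Hb2 Hb4 Hz Hzt Ht Hal2 Hd) as K.
eapply Rle_trans; [|exact K]; right; unfold w; field.

Qed.

Theorem lemma4p5 :
  forall (alpha : R) (d : pt -> pt -> R),
    0 < alpha -> is_d_alpha alpha d -> is_distance d ->
    exists a1 b1 : R, 1 <= a1 /\ 0 < b1 /\ b1 < 1 /\
      forall a b : R, a1 < a -> 0 < b -> b < b1 ->
        forall p : pt, Tset a b p ->
          forall t : R, zc p <= t -> t <= -1 ->
            forall q : pt, Dset t b q -> ball d p (rpt d p) q.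
Proof.
intros al d Hal Hd _.
exists 1, (Rmin (1/4) (al/4)).
assert (Hm1 := Rmin_l (1/4) (al/4)). assert (Hm2 := Rmin_r (1/4) (al/4)).
assert (Hm0 : 0 < Rmin (1/4) (al/4)) by (apply Rmin_glb_lt; lra).
split; [lra|split; [lra|split; [lra|]]].
intros a b Ha Hb Hbb p [Hzp Hrp] t Ht1 Ht2 q [Hzq Hrq].
assert (Hb4 : b <= 1/4) by lra.
assert (Hb2 : b^2 <= al/16).
{ destruct (Rle_lt_dec al 1); nra. }
pose proof (rho_sq p b Hrp) as Hp. pose proof (rho_sq q b Hrq) as Hq.
assert (Hz : zc p < -1) by lra.
subst t.
unfold ball, rpt.
destruct (Hd horigin p) as [_ Hglb].
apply Hglb. intros r Hrd.
pose proof (proj1 Hrd) as Hr.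
destruct (Rle_lt_dec (al * r^2) (-2 * zc p)) as [Hc|Hc].
- apply (proj1 (Hd q p)). apply (core al b p q r); auto.
- set (R0 := sqrt (-2 * zc p / al)).
  assert (HR2 : R0 * R0 = -2 * zc p / al).
  { unfold R0. apply sqrt_sqrt. apply Rlt_le. apply Rdiv_lt_0_compat; lra. }
  assert (HR : 0 < R0).
  { unfold R0. apply sqrt_lt_R0. apply Rdiv_lt_0_compat; lra. }
  assert (HRal : al * R0^2 = -2 * zc p).
  { replace (R0^2) with (R0*R0) by ring. rewrite HR2. field. lra. }
  assert (HRr : R0 < r).
  { assert (R0^2 < r^2).
    { apply Rmult_lt_reg_l with al; lra. }
    nra. }
  assert (HdR : dset al horigin p R0).
  { split; [exact HR|].
    unfold in_Balpha, dil, hmul, hinv, horigin; cbn [xc yc zc].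
    set (u := / R0).
    assert (Hur : R0 * u = 1) by (unfold u; field; lra).
    set (w := u*u).
    assert (Hw : w * (-2 * zc p) = al).
    { rewrite <- HRal. unfold w. replace (u*u*(al*R0^2)) with (al*((R0*u)*(R0*u))) by ring.
      rewrite Hur. ring. }
    assert (Hw0 : 0 < w) by (unfold w; unfold u; pose proof (Rinv_0_lt_compat R0 HR); nra).
    assert (Hwz : w * zc p = - al/2) by lra.
    assert (Hwl : w <= al/2) by nra.
    assert (Hwl2 : w*(xc p^2+yc p^2) <= al/2 * b^2).
    { pose proof (pow2_ge_0 (xc p)); pose proof (pow2_ge_0 (yc p)). nra. }
    apply Rle_trans with (w*(xc p^2+yc p^2) + (w*zc p)^2); [right; unfold w; field|].
    rewrite Hwz.
    nra. }
  assert (d q p <= R0).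
  { apply (proj1 (Hd q p)). apply (core al b p q R0); auto. lra. }
  lra.
Qed.
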